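(* Let $(\mathcal S,\mathcal C,\mathcal R,\mathcal K)$ be a mass-action ACR system with ODE $x'(t)=f(x(t))$ and species $\mathcal S=\{S_1,\dots,S_d,S_{d+1},\dots,S_{d+r}\}$, admitting conservation laws $u^i\cdot x(t)=u^i\cdot x(0)=M_i$ for all $t$, $i=1,\dots,k$, with $u^i\in\mathbb R^{d+r}_{>0}$. Split $\mathcal S$ into $\mathcal S_L=\{S_1,\dots,S_d\}$ and $\mathcal S_H=\{S_{d+1},\dots,S_{d+r}\}$, where no species in $\mathcal S_H$ is an ACR species. Let $\{x^*(M): M=(M_1,\dots,M_k)\in\mathbb R^k_{>0}\}$ be the family of positive steady states, $x^*(M)$ lying in the stoichiometry class with conserved quantities $M$. Suppose for the solution $x(t)$ there is $\widetilde M=(\widetilde M_1,\dots,\widetilde M_k)$ such that $x_{d+i}(0)=x^*_{d+i}(\widetilde M)$ for $i=1,\dots,r$. Then the projected system $(\mathcal S_L,\mathcal C_L,\mathcal R_L,\mathcal K_L)$ with initial condition $q_L(x(0))$ has a positive steady state at $\bar x^*=q_L(x^*(\widetilde M))$. In particular, if $S_i\in\mathcal S_L$ is an ACR species with ACR value $x^*_i$, then $\bar x^*_i=x^*_i$.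
   Context: An ACR system is a deterministic system admitting a positive steady state in which some species (an ACR species) takes the same value (its ACR value) at every positive steady state. For $v\in\mathbb Z^{d+r}$, $q_L(v)=(v_1,\dots,v_d)$ and $q_H(v)=(v_{d+1},\dots,v_{d+r})$. The projected network (freezing the species of $\mathcal S_H$ at their initial values) has species $\mathcal S_L$, complexes $q_L(y)$ for $y\in\mathcal C$, and reactions $q_L(y)\to q_L(y')$ for each $y\to y'\in\mathcal R$ with $q_L(y')\ne q_L(y)$; the rate constant of a projected reaction $\bar y\to\bar y'$ is $\sum\kappa_{y\to y'}\,q_H(x(0))^{q_H(y)}$, summed over all $y\to y'\in\mathcal R$ with $q_L(y)=\bar y$, $q_L(y')=\bar y'$ (with $u^v=\prod u_i^{v_i}$, $0^0=1$). The projected system is the mass-action deterministic system of this network; equivalently its vector field is $\bar f_i(x_1,\dots,x_d)=f_i(x_1,\dots,x_d,x_{d+1}(0),\dots,x_{d+r}(0))$, $i=1,\dots,d$. *)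

(* Defs.v *)
From HB Require Import structures.
From mathcomp Require Import all_boot all_order all_algebra.
Set Implicit Arguments. Unset Strict Implicit. Unset Printing Implicit Defensive.
Import Order.TTheory GRing.Theory Num.Theory.
Local Open Scope ring_scope.

Definition complex (n : nat) := {ffun 'I_n -> nat}.
Definition network (n : nat) := seq (complex n * complex n).

Section MassAction.
Variables (R : realFieldType) (n : nat).

(* u^v = prod_i u_i^{v_i}, with 0^0 = 1 *)
Definition monom (x : 'I_n -> R) (y : complex n) : R := \prod_(i < n) x i ^+ y i.

Definition ma_field (N : network n) (kappa : complex n * complex n -> R)
  (x : 'I_n -> R) : 'I_n -> R :=
  fun i => \sum_(p <- N) kappa p * monom x p.1 * ((p.2 i)%:R - (p.1 i)%:R).

Definition positive (x : 'I_n -> R) := forall i, 0 < x i.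

Definition dot (u x : 'I_n -> R) : R := \sum_(i < n) u i * x i.

Definition steady_state (N : network n) kappa (x : 'I_n -> R) :=
  forall i, ma_field N kappa x i = 0.

Definition pos_steady_state (N : network n) kappa (x : 'I_n -> R) :=
  positive x /\ steady_state N kappa x.

Definition ACR_value (N : network n) kappa (i : 'I_n) (c : R) :=
  forall x, pos_steady_state N kappa x -> x i = c.

Definition ACR_species (N : network n) kappa (i : 'I_n) :=
  exists c, ACR_value N kappa i c.

Definition ACR_system (N : network n) kappa :=
  (exists x, pos_steady_state N kappa x) /\ exists i, ACR_species N kappa i.

(* u is a conservation law: u is orthogonal to every reaction vector y' - y,
   hence u . x(t) is constant along every trajectory *)
Definition conservation_law (N : network n) (u : 'I_n -> R) :=
  forall p, p \in N -> \sum_(i < n) u i * ((p.2 i)%:R - (p.1 i)%:R) = 0.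

End MassAction.

Section Projection.
Variables (R : realFieldType) (d r : nat).

Definition qL (y : complex (d + r)) : complex d := [ffun i => y (lshift r i)].
Definition qH (y : complex (d + r)) : complex r := [ffun j => y (rshift d j)].
Definition qLv (x : 'I_(d + r) -> R) : 'I_d -> R := fun i => x (lshift r i).
Definition qHv (x : 'I_(d + r) -> R) : 'I_r -> R := fun j => x (rshift d j).

Definition proj_network (N : network (d + r)) : network d :=
  undup [seq (qL p.1, qL p.2) | p <- N & qL p.2 != qL p.1].

Definition proj_rate (N : network (d + r)) (kappa : complex (d + r) * complex (d + r) -> R)
  (xH0 : 'I_r -> R) (q : complex d * complex d) : R :=
  \sum_(p <- N | (qL p.1 == q.1) && (qL p.2 == q.2)) kappa p * monom xH0 (qH p.1).

End Projection.

(* Main.v *)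
Require Import Defs.
From mathcomp Require Import all_boot all_order all_algebra.
Import Order.TTheory GRing.Theory Num.Theory.
Local Open Scope ring_scope.

Lemma sum_partition (R : nmodType) (T U : eqType) (s : seq T) (s' : seq U)
  (g : T -> U) (F : T -> R) :
  uniq s' ->
  \sum_(q <- s') \sum_(p <- s | g p == q) F p = \sum_(p <- s | g p \in s') F p.
Proof.
move=> us.
under eq_bigr do rewrite big_mkcond.
rewrite exchange_big /= [RHS]big_mkcond; apply: eq_bigr => p _.
rewrite -big_mkcond /= big_const_seq.
have -> : count (fun q => g p == q) s' = count_mem (g p) s'.
  by apply: eq_count => q; rewrite eq_sym.
have -> : count_mem (g p) s' = (g p \in s') :> nat by rewrite count_uniq_mem.
by case: (g p \in s') => /=; rewrite ?addr0.
Qed.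

Lemma monom_split (R : realFieldType) (d r : nat) (x : 'I_(d + r) -> R)
  (y : complex (d + r)) :
  monom x y = monom (qLv x) (qL y) * monom (qHv x) (qH y).
Proof.
rewrite /monom big_split_ord /=; congr (_ * _); apply: eq_bigr => i _;
  by rewrite ffunE.
Qed.

Theorem mainTheorem5 (R : realFieldType) (d r k : nat)
  (N : network (d + r)) (kappa : complex (d + r) * complex (d + r) -> R)
  (u : 'I_k -> 'I_(d + r) -> R)
  (xstar : ('I_k -> R) -> 'I_(d + r) -> R)
  (x0 : 'I_(d + r) -> R) (Mt : 'I_k -> R) :
  uniq N ->
  (forall p, p \in N -> p.1 != p.2) ->
  (forall p, p \in N -> 0 < kappa p) ->
  ACR_system N kappa ->
  (forall i j, 0 < u i j) ->
  (forall i, conservation_law N (u i)) ->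
  (forall j : 'I_r, ~ ACR_species N kappa (rshift d j)) ->
  (forall M : 'I_k -> R, positive M ->
     pos_steady_state N kappa (xstar M) /\ (forall i, dot (u i) (xstar M) = M i)) ->
  (forall i, 0 <= x0 i) ->
  positive Mt ->
  (forall j : 'I_r, x0 (rshift d j) = xstar Mt (rshift d j)) ->
  pos_steady_state (proj_network N) (proj_rate N kappa (qHv x0)) (qLv (xstar Mt)) /\
  (forall (i : 'I_d) (c : R), ACR_value N kappa (lshift r i) c ->
     qLv (xstar Mt) i = c).
Proof.
move=> _ _ _ _ _ _ _ hxs _ hMt hx0.
have [[xpos xss] _] := hxs Mt hMt.
set xs := xstar Mt.
split; last by move=> i c hc; apply: hc.
split; first by move=> i; apply: xpos.
move=> i.
rewrite -(xss (lshift r i)).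
set g := fun p : complex (d + r) * complex (d + r) => (qL p.1, qL p.2).
set s' := proj_network N.
have us' : uniq s' by apply: undup_uniq.
pose G p := kappa p * monom (qHv x0) (qH p.1) * monom (qLv xs) (qL p.1) *
  (((qL p.2) i)%:R - ((qL p.1) i)%:R).
have -> : ma_field s' (proj_rate N kappa (qHv x0)) (qLv xs) i =
   \sum_(q <- s') \sum_(p <- N | g p == q) G p.
  rewrite /ma_field; apply: eq_bigr => [[q1 q2]] _.
  rewrite /proj_rate !big_distrl /=.
  apply: eq_big => [p|p /andP[/eqP e1 /eqP e2]]; first by rewrite /g xpair_eqE.
  by rewrite /G /= e1 e2.
rewrite sum_partition //.
have -> : ma_field N kappa xs (lshift r i) = \sum_(p <- N) G p.
  rewrite /ma_field; apply: eq_bigr => p _.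
  rewrite /G monom_split !ffunE.
  have -> : monom (qHv x0) (qH p.1) = monom (qHv xs) (qH p.1).
    by rewrite /monom; apply: eq_bigr => j _; rewrite /qHv hx0.
  by rewrite [monom (qLv xs) _ * _]mulrC mulrA.
rewrite [RHS](bigID (fun p => g p \in s')) /=.
rewrite [X in _ = _ + X]big_seq_cond [X in _ = _ + X]big1 ?addr0 // => p /andP[pin nin].
case E: (qL p.2 == qL p.1); first by rewrite /G (eqP E) subrr mulr0.
move/negP: nin; case; rewrite /s' /proj_network mem_undup.
by apply/mapP; exists p; rewrite // mem_filter E pin.
Qed.
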